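(* Let $\mathcal{F}:\mathbb{R}^K\to\mathbb{R}^K$ be bijective with $\mathcal{F}$ and $\mathcal{F}^{-1}$ both continuously differentiable. Let $\|\cdot\|$ be an induced matrix norm (with the associated vector norm), and suppose there are constants $\gamma,\zeta,\beta$ such that $\|J(x_1)-J(x_2)\|\le\gamma$, $\|J(x)\|\le\zeta$ and $\|J^{-1}(x)\|\le\beta$ for all $x_1,x_2,x\in\mathbb{R}^K$. Let $y_1,\dots,y_M\in\mathbb{R}^K$ be desired outputs, let $x_1^0,\dots,x_M^0\in\mathbb{R}^K$ be initial inputs, and run Iterative Inversion with affine least-squares regression (as in the context). Suppose that for every iteration $n$: $\|\overline{\mathcal{F}(X^n)}-\mathcal{F}(\overline{X^n})\|\le\lambda$, and $\tilde{J}_n^{-1}=J^{-1}(\overline{X^n})(I+\Delta_n)$ for some matrix $\Delta_n$ with $\|\Delta_n\|\le\delta<1/(\zeta\beta)$. Let $\mu=\frac{\zeta^2\beta\delta}{1-\zeta\beta\delta}$ and assume $\beta(1+\delta)(\gamma+\mu)<1$. Let $\rho=\frac{2\lambda\beta(1+\delta)(\mu+\zeta)}{1-\beta(1+\delta)(\mu+\gamma)}$. Then for every $\epsilon>0$ there exists $k<\infty$ such that $\|\overline{\mathcal{F}(X^k)}-\overline{Y}\|\le\rho+\epsilon$.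
   Context: Vectors are row vectors. $J(x)\in\mathbb{R}^{K\times K}$ denotes the Jacobian of $\mathcal{F}$ at $x$ in the row convention, $\mathcal{F}(x+h)=\mathcal{F}(x)+hJ(x)+o(\|h\|)$, and $J^{-1}(x)=[J(x)]^{-1}$ (the Jacobian of $\mathcal{F}^{-1}$ at $\mathcal{F}(x)$). Iterative Inversion (affine least-squares version): with $X^n=(x_1^n,\dots,x_M^n)^T\in\mathbb{R}^{M\times K}$, $\mathcal{F}(X^n)=(\mathcal{F}(x_1^n),\dots,\mathcal{F}(x_M^n))^T$, row means $\overline{X^n}=\frac1M\sum_i x_i^n$, $\overline{\mathcal{F}(X^n)}=\frac1M\sum_i\mathcal{F}(x_i^n)$, $\overline{Y}=\frac1M\sum_i y_i$, and $\mathbf{1}$ the all-ones column vector of length $M$, set $\Theta_{n+1}=(\mathcal{F}(X^n)-\mathbf{1}\overline{\mathcal{F}(X^n)})^{\dagger}(X^n-\mathbf{1}\overline{X^n})$ and $b_{n+1}=\overline{X^n}-\overline{\mathcal{F}(X^n)}\Theta_{n+1}$ (the minimum-norm least-squares fit of $x\approx \mathcal{F}(x)\Theta+b$ on the pairs $(\mathcal{F}(x_i^n),x_i^n)$; $\dagger$ is the Moore–Penrose pseudoinverse), and $x_i^{n+1}=y_i\Theta_{n+1}+b_{n+1}$. Define $\tilde{J}_n^{-1}=\Theta_{n+1}=(\mathcal{F}(X^n)-\mathbf{1}\overline{\mathcal{F}(X^n)})^{\dagger}(X^n-\mathbf{1}\overline{X^n})$. *)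

(* Defs.v *)
From HB Require Import structures.
From mathcomp Require Import all_boot all_order all_algebra.
From mathcomp Require Import all_classical all_reals all_analysis.
Set Implicit Arguments. Unset Strict Implicit. Unset Printing Implicit Defensive.
Import Order.TTheory GRing.Theory Num.Theory.
Import numFieldNormedType.Exports.
Local Open Scope classical_set_scope.
Local Open Scope ring_scope.

Section Defs.
Variable R : realType.

Definition is_vnorm (K : nat) (N : 'rV[R]_K -> R) : Prop :=
  [/\ forall x y, N (x + y) <= N x + N y,
      forall (a : R) x, N (a *: x) = `|a| * N x
    & forall x, N x = 0 -> x = 0].

Definition opnorm (K : nat) (N : 'rV[R]_K -> R) (A : 'M[R]_K) : R :=
  sup [set N (x *m A) | x in [set x | N x = 1]].

Definition is_MP_pinv (m n : nat) (A : 'M[R]_(m, n)) (P : 'M[R]_(n, m)) : Prop :=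
  [/\ A *m P *m A = A, P *m A *m P = P,
      (A *m P)^T = A *m P & (P *m A)^T = P *m A].

Definition pinv (m n : nat) (A : 'M[R]_(m, n)) : 'M[R]_(n, m) :=
  xget 0 [set P | is_MP_pinv A P].

Definition rowmean (M K : nat) (X : 'M[R]_(M, K)) : 'rV[R]_K :=
  (M%:R)^-1 *: \sum_(i < M) row i X.

Definition center (M K : nat) (X : 'M[R]_(M, K)) : 'M[R]_(M, K) :=
  \matrix_(i < M) (row i X - rowmean X).

Definition Fmx (M K : nat) (F : 'rV[R]_K -> 'rV[R]_K) (X : 'M[R]_(M, K)) : 'M[R]_(M, K) :=
  \matrix_(i < M) F (row i X).

(* Theta_{n+1} computed from X^n *)
Definition IItheta (M K : nat) (F : 'rV[R]_K -> 'rV[R]_K) (X : 'M[R]_(M, K)) : 'M[R]_K :=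
  pinv (center (Fmx F X)) *m center X.

(* b_{n+1} computed from X^n *)
Definition IIb (M K : nat) (F : 'rV[R]_K -> 'rV[R]_K) (X : 'M[R]_(M, K)) : 'rV[R]_K :=
  rowmean X - rowmean (Fmx F X) *m IItheta F X.

Definition IIstep (M K : nat) (F : 'rV[R]_K -> 'rV[R]_K) (Y : 'M[R]_(M, K))
  (X : 'M[R]_(M, K)) : 'M[R]_(M, K) :=
  \matrix_(i < M) (row i Y *m IItheta F X + IIb F X).

Fixpoint IIiter (M K : nat) (F : 'rV[R]_K -> 'rV[R]_K) (Y X0 : 'M[R]_(M, K)) (n : nat)
  : 'M[R]_(M, K) :=
  match n with
  | 0 => X0
  | n'.+1 => IIstep F Y (IIiter F Y X0 n')
  end.

End Defs.

(* Main.v *)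
Require Import Defs.
From HB Require Import structures.
From mathcomp Require Import all_boot all_order all_algebra.
From mathcomp Require Import all_classical all_reals all_analysis.
From mathcomp Require Import lra ring.
Import Order.TTheory GRing.Theory Num.Theory.
Import numFieldNormedType.Exports.
Local Open Scope classical_set_scope.
Local Open Scope ring_scope.
Set Implicit Arguments. Unset Strict Implicit.


Section NormFacts.
Variables (R : realType) (K : nat) (N : 'rV[R]_K -> R).
Hypothesis hN : is_vnorm N.

Lemma ND x y : N (x + y) <= N x + N y.
Proof. by case: hN. Qed.
Lemma NZ a x : N (a *: x) = `|a| * N x.
Proof. by case: hN. Qed.
Lemma N0 : N 0 = 0.
Proof. by have := NZ 0 0; rewrite scale0r normr0 mul0r. Qed.
Lemma NN x : N (- x) = N x.
Proof. by rewrite -scaleN1r NZ normrN normr1 mul1r. Qed.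
Lemma Nge0 x : 0 <= N x.
Proof. have := ND x (- x); rewrite subrr N0 NN => h; lra. Qed.
Lemma Ngt0 x : x != 0 -> 0 < N x.
Proof.
move=> x0; rewrite lt0r Nge0 andbT; apply/eqP => h.
by move/eqP: x0; apply; case: hN => _ _; apply.
Qed.
Lemma NB x y : N (x - y) <= N x + N y.
Proof. by rewrite -(NN y) ND. Qed.
Lemma NtriB x y z : N (x - z) <= N (x - y) + N (y - z).
Proof. by have := ND (x - y) (y - z); rewrite addrA subrK. Qed.

Lemma Nsum (I : Type) (r : seq I) (P : pred I) (f : I -> 'rV[R]_K) :
  N (\sum_(i <- r | P i) f i) <= \sum_(i <- r | P i) N (f i).
Proof.
elim/big_ind2 : _ => //; first by rewrite N0.
move=> a b c d h1 h2; apply: le_trans (ND _ _) _; exact: lerD.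
Qed.

Lemma coord_le (x : 'rV[R]_K) j : `|x 0 j| <= `|x|.
Proof.
have /mapP[j' Hj ->] : `|x 0 j| \in [seq `|x ij.1 ij.2| | ij : 'I_1 * 'I_K].
  by apply/mapP; exists (0, j) => //=; rewrite mem_enum.
by rewrite [leRHS]/Num.Def.normr /= mx_normrE; apply/bigmax_geP; right => /=; exists j'.
Qed.

Lemma Ncomb (u : 'I_K -> 'rV[R]_K) (x : 'rV[R]_K) :
  N (\sum_j x 0 j *: u j) <= `|x| * \sum_j N (u j).
Proof.
apply: le_trans (@Nsum _ _ _ _) _; rewrite mulr_sumr; apply: ler_sum => j _.
by rewrite NZ ler_wpM2r ?Nge0 ?coord_le.
Qed.

Definition Cup := \sum_j N (delta_mx (0 : 'I_1) j).

Lemma Nup x : N x <= `|x| * Cup.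
Proof. by rewrite {1}(row_sum_delta x); apply: Ncomb. Qed.

Lemma Cup_ge0 : 0 <= Cup.
Proof. by apply: sumr_ge0 => j _; apply: Nge0. Qed.

Lemma Ncont : continuous N.
Proof.
move=> x; apply/(@cvgrPdist_le _ _ _ (nbhs x) _) => e e0.
rewrite nearE; apply/nbhs_ballP; exists (e / (Cup + 1)).
  by apply: divr_gt0 => //; rewrite ltr_wpDl // Cup_ge0.
move=> y /=; rewrite -ball_normE /= => hxy.
have h1 : N x <= N y + N (x - y) by have := ND y (x - y); rewrite [y + _]addrC subrK.
have h2 : N y <= N x + N (y - x) by have := ND x (y - x); rewrite [x + _]addrC subrK.
have h3 : N (x - y) <= e.
  apply: le_trans (Nup _) _.
  have hC := Cup_ge0.
  rewrite -(ler_pM2r (_ : 0 < (Cup + 1)^-1)) ?invr_gt0 ?ltr_wpDl //.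
  apply: le_trans (ltW hxy); rewrite -mulrA ler_piMr ?normr_ge0 //.
  by rewrite ler_pdivrMr ?mul1r ?lerDl // ltr_wpDl.
have h4 : N (y - x) = N (x - y) by rewrite -NN opprB.
rewrite ler_norml; apply/andP; split; lra.
Qed.

End NormFacts.


Section NormFacts2.
Variables (R : realType) (K : nat) (N : 'rV[R]_K -> R).
Hypothesis hN : is_vnorm N.

Lemma normalize n (x : 'rV[R]_n) : x != 0 -> `| `|x|^-1 *: x | = 1.
Proof.
move=> x0; rewrite normrZ normfV normr_id mulVf //.
by rewrite normr_eq0.
Qed.

Lemma Nlow : exists2 c, 0 < c & forall x, c * `|x| <= N x.
Proof.
case: K N hN => [|k] N' hN'.
  exists 1 => // x; by rewrite thinmx0 normr0 mulr0 (N0 hN').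
pose A := [set x : 'rV[R]_k.+1 | `|x| = 1].
have A0 : A !=set0.
  pose v : 'rV[R]_k.+1 := const_mx 1.
  exists (`|v|^-1 *: v); rewrite /A /=.
  apply: normalize; apply/eqP => /matrixP /(_ 0 0); rewrite !mxE => /eqP.
  by rewrite oner_eq0.
have cA : compact A.
  apply: bounded_closed_compact.
    exists 1; split => // M M1 x Ax; rewrite /= Ax; exact: ltW.
  have := (continuous_closedP (fun x : 'rV[R]_k.+1 => `|x|)).1 (@norm_continuous _ _) _ (@closed_eq R 1).
  by apply.
have [c cA' cmin] := EVT_min_rV A0 cA (continuous_subspaceT (Ncont (R:=R) hN')).
have c0 : c != 0.
  apply/eqP => c0; move: cA'; rewrite inE /A /= c0 normr0 => /eqP.
  by rewrite eq_sym oner_eq0.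
exists (N' c); first exact: (Ngt0 hN').
move=> x; have [->|x0] := eqVneq x 0; first by rewrite normr0 mulr0 (N0 hN').
have := cmin (`|x|^-1 *: x); rewrite inE /A /= normalize // => /(_ erefl).
rewrite (NZ hN') normfV normr_id => h.
have xp : 0 < `|x| by rewrite normr_gt0.
by rewrite -ler_pdivlMr // mulrC.
Qed.

End NormFacts2.


Section Opnorm.
Variables (R : realType) (K : nat) (N : 'rV[R]_K -> R).
Hypothesis hN : is_vnorm N.

Lemma mul_comb (u : 'rV[R]_K) (A : 'M[R]_K) :
  u *m A = \sum_j u 0 j *: (delta_mx 0 j *m A).
Proof.
rewrite {1}(row_sum_delta u) mulmx_suml; apply: eq_bigr => j _.
by rewrite scalemxAl.
Qed.

Lemma opnorm_ub (A : 'M[R]_K) :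
  has_ubound [set N (x *m A) | x in [set x | N x = 1]].
Proof.
have [c c0 hc] := Nlow hN.
exists (c^-1 * \sum_j N (delta_mx 0 j *m A)) => _ [u /= Nu1 <-].
rewrite mul_comb; apply: le_trans (Ncomb hN _ _) _.
apply: ler_wpM2r; first by apply: sumr_ge0 => j _; apply: Nge0.
by rewrite -(ler_pM2l c0) mulfV ?gt_eqF // -Nu1 hc.
Qed.

Lemma opnorm_ge0 (A : 'M[R]_K) : 0 <= opnorm N A.
Proof.
rewrite /opnorm.
set S := [set _ | _ in _].
have [[y Sy]|S0] := pselect (S !=set0).
  have hs : has_sup S by split; [exists y | exact: opnorm_ub].
  apply: le_trans (sup_upper_bound hs Sy).
  by case: Sy => x _ <-; apply: Nge0.
have -> : S = set0 by apply/eqP/negbNE/negP => /set0P.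
by rewrite sup0.
Qed.

Lemma opnormP (A : 'M[R]_K) x : N (x *m A) <= opnorm N A * N x.
Proof.
have [->|x0] := eqVneq x 0; first by rewrite mul0mx !N0 // mulr0.
have Nx := Ngt0 hN x0.
set u := (N x)^-1 *: x.
have Nu : N u = 1 by rewrite NZ // normfV (ger0_norm (ltW Nx)) mulVf ?gt_eqF.
have Su : [set N (x *m A) | x in [set x | N x = 1]] (N (u *m A)) by exists u.
have hs : has_sup [set N (x *m A) | x in [set x | N x = 1]].
  by split; [exists (N (u *m A)) | exact: opnorm_ub].
have h : N (u *m A) <= opnorm N A := sup_upper_bound hs Su.
have -> : x = N x *: u by rewrite /u scalerA mulfV ?gt_eqF // scale1r.
rewrite -scalemxAl !NZ // normfV (ger0_norm (ltW Nx)) mulVf ?gt_eqF // mulr1.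
by rewrite [X in _ <= X]mulrC ler_pM2l.
Qed.

End Opnorm.


Lemma deriv_eps (R : realType) K (F : 'rV[R]_K -> 'rV[R]_K) p h :
  differentiable F p -> forall e, 0 < e -> exists2 eta, 0 < eta &
   forall s : R, 0 < `|s| < eta -> `|F (p + s *: h) - F p - s *: (h *m jacobian F p)| <= e * `|s|.
Proof.
move=> dF e e0.
have hd := diff_derivable (v:=h) dF.
have hc : (fun s : R => s^-1 *: ((F \o shift p) (s *: h) - F p)) @ 0^' --> 'D_h F p := hd.
rewrite deriveEjacobian // in hc.
move/cvgrPdist_le : hc => /(_ e e0).
rewrite /dnbhs /within nearE => /nbhs_ballP [eta eta0 hb].
exists eta => // s /andP [s0 seta].
have := hb s; rewrite -ball_normE /= sub0r normrN => /(_ seta).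
rewrite -normr_gt0 s0 => /(_ isT).
have sn : s != 0 by rewrite -normr_gt0.
rewrite [p + _]addrC.
set a := h *m 'J F p; set b := F (s *: h + p) - F p.
have -> : b - s *: a = - (s *: (a - s^-1 *: b)).
  by rewrite scalerBr scalerA mulfV // scale1r opprB.
by rewrite normrN normrZ mulrC => hh; rewrite ler_wpM2r.
Qed.

Lemma mvi (R : realType) K (N : 'rV[R]_K -> R) (hN : is_vnorm N)
  (g : R -> 'rV[R]_K) (L : R) :
  (forall t, 0 <= t -> t <= 1 -> exists2 w, N w <= L & forall e, 0 < e ->
     exists2 eta, 0 < eta & forall s, 0 < `|s| < eta ->
       N (g (t + s) - g t - s *: w) <= e * `|s|) ->
  N (g 1 - g 0) <= L.
Proof.
move=> hyp.
have step : forall t, 0 <= t -> t <= 1 -> forall e, 0 < e -> exists2 eta, 0 < eta &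
    forall s, 0 < `|s| < eta -> N (g (t + s) - g t) <= (L + e) * `|s|.
  move=> t t0 t1 e e0; have [w Nw hw] := hyp t t0 t1.
  have [eta eta0 he] := hw e e0; exists eta => // s hs.
  have h2 := he s hs.
  have := ND hN (g (t + s) - g t - s *: w) (s *: w).
  rewrite subrK NZ // => h1.
  have hs0 := normr_ge0 s.
  have : `|s| * N w <= `|s| * L by rewrite ler_wpM2l.
  lra.
apply/ler_addgt0Pr => e e0.
pose B u := N (g u - g 0) <= (L + e) * u.
pose A := [set t : R | (0 <= t <= 1) /\ forall u, 0 <= u <= t -> B u].
have B0 : B 0 by rewrite /B subrr N0 // mulr0.
have A0 : A 0.
  split; first by rewrite lexx ler01.
  move=> u hu; have -> : u = 0 by apply/le_anti; rewrite andbC.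
  exact: B0.
have hs : has_sup A by split; [exists 0 | exists 1 => t [/andP[_ ?] _]].
set c := sup A.
have c0 : 0 <= c := sup_upper_bound hs A0.
have c1 : c <= 1.
  rewrite leNgt; apply/negP => c1.
  have [t [/andP[_ t1] _] ut] := @sup_adherent _ A (c - 1) ltac:(by rewrite subr_gt0) hs.
  rewrite -/c in ut; lra.
have Hlt : forall u, 0 <= u -> u < c -> B u.
  move=> u u0 uc; have [t [_ Bt] ut] := @sup_adherent _ A (c - u) ltac:(by rewrite subr_gt0) hs.
  rewrite -/c in ut; apply: Bt; rewrite u0 /=; lra.
have Bc : B c.
  have := c0; rewrite le_eqVlt => /orP [/eqP c00 | cpos].
    by rewrite -c00.
  have [eta eta0 he] := step c c0 c1 e e0.
  pose m := Num.min c (eta / 2).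
  have m0 : 0 < m by rewrite lt_min cpos divr_gt0.
  have mc : m <= c by rewrite ge_min lexx.
  have me : m <= eta / 2 by rewrite ge_min lexx orbT.
  have h1 := he (- m).
  rewrite normrN gtr0_norm // m0 /= in h1.
  have {}h1 := h1 ltac:(lra).
  have h2 := Hlt (c - m) ltac:(lra) ltac:(lra).
  have h3 := NtriB hN (g c) (g (c - m)) (g 0).
  have h4 : N (g c - g (c - m)) = N (g (c + - m) - g c) by rewrite -NN // opprB.
  rewrite /B in h2 *.
  lra.
have c_eq1 : c = 1.
  apply/eqP; rewrite eq_le c1 /= leNgt; apply/negP => c_lt1.
  have [eta eta0 he] := step c c0 c1 e e0.
  pose m := Num.min (1 - c) (eta / 2).
  have m0 : 0 < m by rewrite lt_min subr_gt0 c_lt1 divr_gt0.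
  have mc : m <= 1 - c by rewrite ge_min lexx.
  have me : m <= eta / 2 by rewrite ge_min lexx orbT.
  have Am : A (c + m).
    split; first by apply/andP; split; lra.
    move=> u /andP [u0 ucm].
    case: (leP u c) => uc.
      move: uc; rewrite le_eqVlt => /orP [/eqP -> //| uc].
      exact: Hlt.
    have h1 := he (u - c).
    have cu : 0 < u - c by rewrite subr_gt0.
    rewrite (gtr0_norm cu) cu /= (_ : c + (u - c) = u) in h1; last by rewrite addrC subrK.
    have {}h1 := h1 ltac:(lra).
    have h3 := NtriB hN (g u) (g c) (g 0).
    rewrite /B in Bc *.
    lra.
  have := sup_upper_bound hs Am; rewrite -/c; lra.
by move: Bc; rewrite /B c_eq1 mulr1.
Qed.


Lemma alg_id (R : realType) K (x1 x0 v1 v2 : 'rV[R]_K) (t s : R) :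
  x1 - (t + s) *: v2 - (x0 - t *: v2) - s *: (v1 - v2) = x1 - x0 - s *: v1.
Proof. by apply/rowP => j; rewrite !mxE; ring. Qed.

Lemma mvi_F (R : realType) K (N : 'rV[R]_K -> R) (hN : is_vnorm N)
  (F : 'rV[R]_K -> 'rV[R]_K) (hFd : forall x, differentiable F x) (gamma : R)
  (hg : forall x1 x2, opnorm N (jacobian F x1 - jacobian F x2) <= gamma) a h :
  N (F (a + h) - F a - h *m jacobian F a) <= gamma * N h.
Proof.
pose g (t : R) := F (a + t *: h) - t *: (h *m jacobian F a).
have -> : F (a + h) - F a - h *m jacobian F a = g 1 - g 0.
  by rewrite /g !scale1r !scale0r addr0 subr0 addrAC.
apply: (mvi hN) => t t0 t1.
set p := a + t *: h.
exists (h *m (jacobian F p - jacobian F a)).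
  apply: le_trans (opnormP hN _ _) _; apply: ler_wpM2r; [exact: Nge0 | exact: hg].
move=> e e0.
have hC := Cup_ge0 hN.
have [eta eta0 he] := deriv_eps h (hFd p) (divr_gt0 e0 (ltr_wpDl hC ltr01)).
exists eta => // s hs.
have h1 := he s hs.
have E1 : a + (t + s) *: h = p + s *: h by rewrite /p scalerDl addrA.
have E2 : g (t + s) - g t - s *: (h *m (jacobian F p - jacobian F a)) =
          F (p + s *: h) - F p - s *: (h *m jacobian F p).
  rewrite /g E1 mulmxBr; exact: alg_id.
rewrite E2.
apply: (le_trans (Nup hN _)).
have X0 := normr_ge0 (F (p + s *: h) - F p - s *: (h *m 'J F p)).
move: h1 X0; move: (`|F (p + s *: h) - F p - s *: (h *m 'J F p)|) => X h1 X0.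
have hs0 := normr_ge0 s.
have : X * Cup N <= e / (Cup N + 1) * `|s| * Cup N by rewrite ler_wpM2r.
have : e / (Cup N + 1) * `|s| * Cup N <= e * `|s|.
  have q : Cup N / (Cup N + 1) <= 1.
    by rewrite ler_pdivrMr ?mul1r ?lerDl // ltr_wpDl.
  have -> : e / (Cup N + 1) * `|s| * Cup N = (e * `|s|) * (Cup N / (Cup N + 1)).
    by ring.
  by rewrite ler_piMr // mulr_ge0 // ltW.
lra.
Qed.


Lemma jac_inv (R : realType) K (F G : 'rV[R]_K -> 'rV[R]_K) (hFG : cancel F G)
  (hFd : forall x, differentiable F x) (hGd : forall x, differentiable G x) x :
  jacobian F x *m jacobian G (F x) = 1%:M.
Proof.
have hcomp := diff_comp (hFd x) (hGd (F x)).
have hid : G \o F = id by apply: funext => y; exact: hFG.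
rewrite hid in hcomp.
have hd : 'd (id : 'rV[R]_K -> 'rV[R]_K) x = id :> ('rV[R]_K -> 'rV[R]_K) by case: (@is_diff_id R _ x).
apply/row_matrixP => i.
rewrite !rowE mulmx1 mulmxA /jacobian !mul_rV_lin1.
have h1 : ('d G (F x) \o 'd F x) (delta_mx 0 i) = delta_mx 0 i by rewrite -hcomp hd.
exact: h1.
Qed.


Lemma rowmean_step (R : realType) M K (F : 'rV[R]_K -> 'rV[R]_K) (Y X : 'M[R]_(M, K)) :
  rowmean (IIstep F Y X) = rowmean X - (rowmean (Fmx F X) - rowmean Y) *m IItheta F X.
Proof.
case: M Y X => [|m] Y X.
  by rewrite /rowmean !big_ord0 invr0 !scale0r subrr mul0mx subrr.
rewrite /IIstep /IIb {1}/rowmean.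
under eq_bigr do rewrite rowK.
rewrite big_split /= sumr_const card_ord -mulmx_suml.
set T := IItheta F X.
rewrite scalerDr scalemxAl.
rewrite (_ : forall v : 'rV[R]_K, v *+ m.+1 = m.+1%:R *: v); last by move=> v; rewrite scaler_nat.
rewrite scalerA mulVf ?pnatr_eq0 // scale1r.
rewrite -/(rowmean Y) mulmxBl.
move: (rowmean Y *m T) (rowmean X) (rowmean (Fmx F X) *m T) => a b c.
by apply/rowP => j; rewrite !mxE; ring.
Qed.

Lemma vec_id (R : realType) K (f1 f0 Fh F0 yb : 'rV[R]_K) (J Ji D : 'M[R]_K) :
  Ji *m J = 1%:M ->
  f1 - yb = (f1 - Fh) - (f0 - F0) + (Fh - F0 - (- ((f0 - yb) *m (Ji *m (1%:M + D)))) *m J)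
            - (f0 - yb) *m Ji *m D *m J.
Proof.
move=> hJ.
have E : forall e : 'rV[R]_K, (e *m (Ji *m (1%:M + D))) *m J = e + e *m Ji *m D *m J.
  by move=> e; rewrite !mulmxDr mulmx1 mulmxDl -(mulmxA e Ji J) hJ mulmx1 !mulmxA.
rewrite mulNmx opprK E.
move: ((f0 - yb) *m Ji *m D *m J) => w.
by apply/rowP => j; rewrite !mxE; ring.
Qed.

Unset Implicit Arguments. Set Strict Implicit.

Theorem theorem2 (R : realType) (K M : nat)
  (F G : 'rV[R]_K -> 'rV[R]_K)
  (hFG : cancel F G) (hGF : cancel G F)
  (hFd : forall x, differentiable F x) (hFc : continuous (jacobian F))
  (hGd : forall x, differentiable G x) (hGc : continuous (jacobian G))
  (N : 'rV[R]_K -> R) (hN : is_vnorm N)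
  (gamma zeta beta lambda delta : R)
  (hgamma : forall x1 x2, opnorm N (jacobian F x1 - jacobian F x2) <= gamma)
  (hzeta : forall x, opnorm N (jacobian F x) <= zeta)
  (hbeta : forall x, opnorm N (invmx (jacobian F x)) <= beta)
  (Y X0 : 'M[R]_(M, K))
  (hlambda : forall n, N (rowmean (Fmx F (IIiter F Y X0 n))
                          - F (rowmean (IIiter F Y X0 n))) <= lambda)
  (hdelta_lt : delta < 1 / (zeta * beta))
  (hDelta : forall n, exists Delta : 'M[R]_K,
      IItheta F (IIiter F Y X0 n)
        = invmx (jacobian F (rowmean (IIiter F Y X0 n))) *m (1%:M + Delta)
      /\ opnorm N Delta <= delta) :
  let mu := zeta ^+ 2 * beta * delta / (1 - zeta * beta * delta) in
  beta * (1 + delta) * (gamma + mu) < 1 ->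
  let rho := 2 * lambda * beta * (1 + delta) * (mu + zeta)
             / (1 - beta * (1 + delta) * (mu + gamma)) in
  forall eps : R, 0 < eps ->
  exists k : nat, N (rowmean (Fmx F (IIiter F Y X0 k)) - rowmean Y) <= rho + eps.
Proof.
move=> mu hQ rho eps eps0.
have g0 : 0 <= gamma := le_trans (opnorm_ge0 hN _) (hgamma 0 0).
have z0 : 0 <= zeta := le_trans (opnorm_ge0 hN _) (hzeta 0).
have b0 : 0 <= beta := le_trans (opnorm_ge0 hN _) (hbeta 0).
have d0 : 0 <= delta.
  by case: (hDelta 0%N) => D [_ hD]; exact: le_trans (opnorm_ge0 hN _) hD.
have l0 : 0 <= lambda := le_trans (Nge0 hN _) (hlambda 0%N).
have zbd : zeta * beta * delta < 1.
  have [zb0|zbpos] := eqVneq (zeta * beta) 0.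
    by move: hdelta_lt; rewrite zb0 invr0 mulr0; lra.
  have zbp : 0 < zeta * beta by rewrite lt0r zbpos mulr_ge0.
  by move: hdelta_lt; rewrite ltr_pdivlMr //; lra.
have D1 : 0 < 1 - zeta * beta * delta by lra.
have mu0 : 0 <= mu.
  by apply: divr_ge0; [rewrite !mulr_ge0 // exprn_ge0 | exact: ltW].
have Qd : 0 < 1 - beta * (1 + delta) * (mu + gamma) by rewrite [mu + _]addrC; lra.
have rho0 : 0 <= rho.
  apply: divr_ge0; last exact: ltW.
  by rewrite !mulr_ge0 // ?addr_ge0 //; lra.
have [K0|Kpos] : K = 0%N \/ (0 < K)%N by case: (K) => [|k]; [left|right].
  subst K; exists 0%N.
  by rewrite [X in N X]thinmx0 N0 //; lra.
have Junit : forall x, jacobian F x \in unitmx :=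
  fun x => (mulmx1_unit (jac_inv hFG hFd hGd x)).1.
have zb1 : 1 <= zeta * beta.
  pose v : 'rV[R]_K := delta_mx 0 (Ordinal Kpos).
  have v0 : v != 0.
    apply/eqP => /matrixP /(_ 0 (Ordinal Kpos)); rewrite !mxE eqxx /= => /eqP.
    by rewrite oner_eq0.
  have Nv := Ngt0 hN v0.
  pose u := (N v)^-1 *: v.
  have Nu : N u = 1 by rewrite NZ // normfV (ger0_norm (ltW Nv)) mulVf ?gt_eqF.
  pose J := jacobian F 0.
  have : N u <= beta * zeta.
    have -> : u = u *m J *m invmx J by rewrite -mulmxA mulmxV ?mulmx1 // Junit.
    apply: le_trans (opnormP hN _ _) _.
    have h1 := opnormP hN J u; rewrite Nu mulr1 in h1.
    apply: le_trans (ler_wpM2r (Nge0 hN _) (hbeta 0)) _.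
    by apply: ler_wpM2l => //; apply: le_trans h1 _; exact: hzeta.
  by rewrite Nu mulrC.
have zd0 : 0 <= zeta * delta := mulr_ge0 z0 d0.
have hmu : zeta * delta <= mu.
  rewrite /mu ler_pdivlMr //.
  have h1 : zeta * delta <= zeta * delta * (zeta * beta) by rewrite ler_peMr.
  have h2 : 0 <= zeta * delta * (zeta * beta * delta) by rewrite !mulr_ge0.
  rewrite expr2; nra.
pose q := beta * delta * zeta + gamma * beta * (1 + delta).
have q0 : 0 <= q by rewrite addr_ge0 // !mulr_ge0 //; lra.
have qQ : q <= beta * (1 + delta) * (gamma + mu).
  have h1 : beta * (zeta * delta) <= beta * mu by rewrite ler_wpM2l.
  have h2 : 0 <= beta * delta * mu by apply: mulr_ge0 => //; apply: mulr_ge0.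
  rewrite /q; nra.
have q1 : q < 1 by lra.
pose xb n := rowmean (IIiter F Y X0 n).
pose fb n := rowmean (Fmx F (IIiter F Y X0 n)).
pose yb := rowmean Y.
pose e n := fb n - yb.
have rec : forall n, N (e n.+1) <= q * N (e n) + 2 * lambda.
  move=> n.
  have [D [hT hD]] := hDelta n.
  pose J := jacobian F (xb n).
  pose Ji := invmx J.
  have hJ : Ji *m J = 1%:M := mulVmx (Junit _).
  pose h := - ((fb n - yb) *m (Ji *m (1%:M + D))).
  have step : xb n.+1 = xb n + h.
    by rewrite /xb /= rowmean_step hT.
  have E := vec_id (fb n.+1) (fb n) (F (xb n.+1)) (F (xb n)) yb D hJ.
  rewrite /e E -/h.
  set A := fb n.+1 - F (xb n.+1).
  set B := fb n - F (xb n).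
  set C := F (xb n.+1) - F (xb n) - h *m J.
  set W := (fb n - yb) *m Ji *m D *m J.
  have hA : N A <= lambda := hlambda n.+1.
  have hB : N B <= lambda := hlambda n.
  have hC : N C <= gamma * N h by rewrite /C step; apply: mvi_F.
  set a := N (fb n - yb).
  have ha : 0 <= a := Nge0 hN _.
  have hb : N ((fb n - yb) *m Ji) <= beta * a.
    apply: le_trans (opnormP hN _ _) _; apply: ler_wpM2r => //; exact: hbeta.
  have hc : N ((fb n - yb) *m Ji *m D) <= delta * N ((fb n - yb) *m Ji).
    apply: le_trans (opnormP hN _ _) _; apply: ler_wpM2r; [exact: Nge0 hN _|exact: hD].
  have hW : N W <= zeta * N ((fb n - yb) *m Ji *m D).
    apply: le_trans (opnormP hN _ _) _; apply: ler_wpM2r; [exact: Nge0 hN _|exact: hzeta].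
  have hh : N h <= N ((fb n - yb) *m Ji) + N ((fb n - yb) *m Ji *m D).
    by rewrite /h NN // !mulmxDr mulmx1 mulmxA; exact: ND.
  have tri : N (A - B + C - W) <= N A + N B + N C + N W.
    apply: le_trans (NB hN _ _) _; rewrite lerD2r.
    apply: le_trans (ND hN _ _) _; rewrite lerD2r.
    exact: NB.
  move: hb hc hW hh hC tri.
  move: (N ((fb n - yb) *m Ji)) (N ((fb n - yb) *m Ji *m D)) (N h) (N W) (N C)
     (N (A - B + C - W)) => b c nh nw nc t hb hc hW hh hC tri.
  have f1 : gamma * nh <= gamma * (b + c) by rewrite ler_wpM2l.
  have f2 : gamma * c <= gamma * (delta * b) by rewrite ler_wpM2l.
  have f3 : gamma * (1 + delta) * b <= gamma * (1 + delta) * (beta * a).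
    by rewrite ler_wpM2l // mulr_ge0 //; lra.
  have f4 : zeta * c <= zeta * (delta * b) by rewrite ler_wpM2l.
  have f5 : zeta * delta * b <= zeta * delta * (beta * a) by rewrite ler_wpM2l.
  rewrite /q; nra.
have q1' : 0 < 1 - q by lra.
pose B := 2 * lambda / (1 - q).
have B0 : 0 <= B by apply: divr_ge0; [lra | exact: ltW].
have hB : q * B + 2 * lambda = B.
  rewrite /B; field; lra.
pose E0 := N (e 0%N).
have E00 : 0 <= E0 := Nge0 hN _.
have it : forall n, N (e n) <= q ^+ n * E0 + B.
  elim => [|n IH]; first by rewrite expr0 mul1r lerDl.
  apply: le_trans (rec n) _.
  have : q * N (e n) <= q * (q ^+ n * E0 + B) by rewrite ler_wpM2l.
  rewrite exprS; lra.
have Brho : B <= rho.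
  have P1 : 1 <= beta * (1 + delta) * (mu + zeta).
    have h1 : 0 <= beta * delta * zeta by rewrite mulr_ge0 // mulr_ge0.
    have h2 : 0 <= beta * (1 + delta) * mu by rewrite mulr_ge0 // mulr_ge0 //; lra.
    nra.
  have Qq : 1 - beta * (1 + delta) * (mu + gamma) <= 1 - q by rewrite [mu + _]addrC; lra.
  rewrite /rho /B.
  set P := beta * (1 + delta) * (mu + zeta).
  set Qv := 1 - beta * (1 + delta) * (mu + gamma).
  have -> : 2 * lambda * beta * (1 + delta) * (mu + zeta) = 2 * lambda * P by rewrite /P !mulrA.
  rewrite ler_pdivrMr //.
  have k1 : 2 * lambda <= 2 * lambda * P by rewrite ler_peMr //; lra.
  have k2 : 2 * lambda * P / Qv * Qv = 2 * lambda * P by rewrite divfK // gt_eqF.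
  have k3 : 2 * lambda * P / Qv * Qv <= 2 * lambda * P / Qv * (1 - q).
    apply: ler_wpM2l => //; apply: divr_ge0; [|exact: ltW].
    apply: mulr_ge0; first exact: mulr_ge0.
    exact: le_trans ler01 P1.
  lra.
have qn : `|q| < 1 by rewrite ger0_norm.
have := cvg_expr qn.
move/(@cvgrPdist_le _ _ _ _ _ _ _) => /(_ (eps / (E0 + 1))).
have ep : 0 < eps / (E0 + 1) by apply: divr_gt0 => //; lra.
move=> /(_ ep) [k0 _ hk].
have := hk k0 (leqnn k0); rewrite /= sub0r normrN ger0_norm ?exprn_ge0 // => hqk.
exists k0.
have : q ^+ k0 * E0 <= eps.
  have : q ^+ k0 * E0 <= eps / (E0 + 1) * E0 by rewrite ler_wpM2r.
  have : eps / (E0 + 1) * E0 <= eps.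
    rewrite mulrAC ler_pdivrMr; last lra.
    by rewrite ler_wpM2l; lra.
  lra.
have := it k0.
rewrite /e /fb /yb.
lra.
Qed.
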